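(* Let $G$ be a connected graph with $n$ vertices and $m$ edges. If $m\ge 2n^{3/2}$, then $\frac{q(G)}{R(G)}<\frac{n}{\sqrt{n-1}}$.
   Context: All graphs are finite and simple. For a vertex $u$, $d(u)$ is its degree. The Randić index is $R(G)=\sum_{\{u,v\}\in E(G)} \frac{1}{\sqrt{d(u)d(v)}}$. The signless Laplacian is $Q=D+A$ ($D$ the diagonal degree matrix, $A$ the adjacency matrix), and $q(G)$ is its largest eigenvalue. *)

(* Defs.v *)
(* Simple graph on vertex set 'I_n given by a symmetric,
   irreflexive boolean relation e. *)
From HB Require Import structures.
From mathcomp Require Import all_boot all_order all_algebra.
Set Implicit Arguments. Unset Strict Implicit. Unset Printing Implicit Defensive.
Import Order.TTheory GRing.Theory Num.Theory.
Local Open Scope ring_scope.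

Section Graph.
Variable n : nat.
Variable e : rel 'I_n.

Definition deg (u : 'I_n) : nat := #|[set v | e u v]|.

Definition edges : {set {set 'I_n}} :=
  [set E : {set 'I_n} | [exists u, exists v, (E == [set u; v]) && e u v]].

Definition nedges : nat := #|edges|.

Definition randic (R : rcfType) : R :=
  \sum_(E in edges) (Num.sqrt ((\prod_(v in E) deg v)%N)%:R)^-1.

Definition signless_lap (R : rcfType) : 'M[R]_n :=
  \matrix_(i, j) ((deg i)%:R *+ (i == j) + (e i j)%:R).

End Graph.

(* Main.v *)
Require Import Defs.
From HB Require Import structures.
From mathcomp Require Import all_boot all_order all_algebra.
From mathcomp Require Import lra.
Import Order.TTheory GRing.Theory Num.Theory.
Local Open Scope ring_scope.

Lemma card_pred_le (n : nat) (i : 'I_n) (P : pred 'I_n) : ~~ P i -> (#|P| <= n.-1)%N.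
Proof.
move=> Pi; have <- : #|predC1 i| = n.-1 by rewrite cardC1 card_ord.
apply: subset_leq_card.
apply/subsetP => j Pj; rewrite !inE; apply: contraNneq Pi => <-; exact: Pj.
Qed.

Lemma deg_le (n : nat) (e : rel 'I_n) (e_irr : irreflexive e) u : (deg e u <= n.-1)%N.
Proof.
rewrite /deg; apply: (@leq_trans #|[pred v | e u v]|); last first.
  by apply: (@card_pred_le n u [pred v | e u v]); rewrite /= e_irr.
by apply: subset_leq_card; apply/subsetP => j; rewrite !inE.
Qed.

Lemma q_le (R : rcfType) (n : nat) (e : rel 'I_n) (e_sym : symmetric e)
  (e_irr : irreflexive e) (q : R) :
  eigenvalue (signless_lap e R) q -> q <= 2 * (n.-1)%:R.
Proof.
move/eigenvalueP=> [v hv v0].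
have [i0 _] : exists i0 : 'I_n, True.
  move: v hv v0; case: n e e_sym e_irr => [|n'] e _ _ v _; first by rewrite thinmx0 eqxx.
  by move=> _; exists ord0.
pose i := [arg max_(i > i0) `|v 0 i|]%O.
have imax : forall j, `|v 0 j| <= `|v 0 i|.
  by move=> j; rewrite /i; case: arg_maxP => // k _ H; exact: H.
have vi0 : 0 < `|v 0 i|.
  rewrite normr_gt0; apply: contra v0 => /eqP vi; apply/eqP/rowP => j.
  rewrite mxE; apply/eqP; rewrite -normr_le0; have := imax j; by rewrite vi normr0.
have := congr1 (fun M : 'rV[R]_n => M 0 i) hv; rewrite !mxE.
under eq_bigr => j _ do rewrite mxE mulrDr.
rewrite big_split /= (bigD1 i) //= eqxx mulr1n big1 ?addr0; last first.
  by move=> j /negbTE ->; rewrite mulr0n mulr0.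
set S := \sum_j _ => h.
have hS : `|S| <= `|v 0 i| * (n.-1)%:R.
  apply: (le_trans (ler_norm_sum _ _ _)).
  apply: (@le_trans _ _ (\sum_j `|v 0 i| * (e j i)%:R)).
    apply: ler_sum => j _; rewrite normrM normr_nat.
    by apply: ler_wpM2r; rewrite ?ler0n ?imax.
  rewrite -mulr_sumr -natr_sum; apply: ler_wpM2l; first exact: normr_ge0.
  rewrite ler_nat; rewrite (_ : (\sum_j (e j i : nat))%N = \sum_(j | e j i) 1)%N.
    by rewrite sum1_card; apply: (@card_pred_le n i [pred j | e j i]); rewrite /= e_irr.
  by rewrite [RHS]big_mkcond; apply: eq_bigr => j _; case: (e j i).
have hd : (deg e i)%:R <= (n.-1)%:R :> R by rewrite ler_nat deg_le.
have h2 : `|q| * `|v 0 i| <= `|v 0 i| * (n.-1)%:R + `|v 0 i| * (n.-1)%:R.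
  rewrite -normrM -h; apply: (le_trans (ler_normD _ _)); apply: lerD => //.
  by rewrite normrM normr_nat ler_wpM2l.
have h3 : `|q| <= 2 * (n.-1)%:R.
  by rewrite -(ler_pM2r vi0); lra.
exact: le_trans (ler_norm q) h3.
Qed.

Lemma edgesP (n : nat) (e : rel 'I_n) E :
  E \in edges e -> exists u v, E = [set u; v] /\ e u v.
Proof. by rewrite inE => /existsP[u /existsP[v /andP[/eqP -> h]]]; exists u, v. Qed.

Theorem lemma3p3 (R : rcfType) (n : nat) (e : rel 'I_n)
  (e_sym : symmetric e) (e_irr : irreflexive e)
  (e_conn : forall x y : 'I_n, connect e x y)
  (hm : 2 * n%:R * Num.sqrt (n%:R : R) <= (nedges e)%:R)
  (q : R) (hq : eigenvalue (signless_lap e R) q)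
  (hqmax : forall a : R, eigenvalue (signless_lap e R) a -> a <= q) :
  q / randic e R < n%:R / Num.sqrt ((n - 1)%N)%:R.
Proof.
have hq2 := @q_le R n e e_sym e_irr q hq.
have n0 : (0 < n)%N.
  move: hq; case: n e {e_sym e_irr e_conn hm hqmax hq2} => // e.
  by move/eigenvalueP => [v _]; rewrite thinmx0 eqxx.
have sn1 : 1 <= Num.sqrt (n%:R : R).
  by rewrite -[X in X <= _]sqrtr1 ler_sqrt // ler1n.
have m0 : (0 < nedges e)%N.
  rewrite -(ltr0n R); apply: lt_le_trans hm.
  have : 1 <= n%:R :> R by rewrite ler1n.
  nra.
have [E EE] : exists E, E \in edges e by apply/card_gt0P.
have [u [w [_ euw]]] := @edgesP _ _ _ EE.
have uw : u != w by apply: contraTneq euw => ->; rewrite e_irr.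
have n2 : (1 < n)%N.
  have := max_card [set u; w]; rewrite cards2 uw card_ord; done.
set d : R := (n.-1)%:R.
have d1 : 1 <= d by rewrite /d ler1n -ltnS prednK.
have hN : n%:R = d + 1 by rewrite /d -{1}(prednK (ltnW n2)) -addn1 natrD.
have hn1 : (n - 1)%N = n.-1 by rewrite subn1.
rewrite hn1 -/d hN.
have hR : (nedges e)%:R * d^-1 <= randic e R.
  rewrite /randic /nedges mulr_natl -sumr_const.
  apply: ler_sum => F /(@edgesP _ _ _) [a [b [-> eab]]].
  have ab : a != b by apply: contraTneq eab => ->; rewrite e_irr.
  rewrite big_setU1 ?inE //= big_set1.
  have da : (0 < deg e a)%N by apply/card_gt0P; exists b; rewrite inE.
  have db : (0 < deg e b)%N by apply/card_gt0P; exists a; rewrite inE e_sym.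
  set P := (deg e a * deg e b)%N.
  have P1 : 1 <= Num.sqrt (P%:R : R) by rewrite -[X in X <= _]sqrtr1 ler_sqrt // ler1n muln_gt0 da.
  have Pd : Num.sqrt (P%:R : R) <= d.
    rewrite -(ger0_norm (le_trans ler01 d1)) -sqrtr_sqr ler_sqrt ?sqr_ge0 //.
    by rewrite /d -natrX ler_nat expnS expn1 leq_mul ?deg_le.
  rewrite lef_pV2 ?posrE //; [exact: lt_le_trans ltr01 d1 | exact: lt_le_trans ltr01 P1].
set m := (nedges e)%:R in hm hR.
set Rr := randic e R in hR *.
have dpos : 0 < d by exact: lt_le_trans ltr01 d1.
have hR' : m <= Rr * d.
  by rewrite -(ler_pM2r dpos) in hR; rewrite -mulrA mulVf ?mulr1 in hR; [exact: hR | rewrite gt_eqF].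
set t := Num.sqrt d; set s := Num.sqrt (d + 1).
have t2 : t ^+ 2 = d by rewrite sqr_sqrtr // ltW.
have s2 : s ^+ 2 = d + 1 by rewrite sqr_sqrtr // addr_ge0 // ltW.
have tpos : 0 < t by rewrite sqrtr_gt0.
have ts : t <= s by rewrite ler_sqrt ?addr_ge0 ?ltW //; lra.
have Rpos : 0 < Rr by apply: lt_le_trans hR; rewrite divr_gt0 // /m ltr0n.
rewrite ltr_pdivrMr // mulrAC ltr_pdivlMr //.
have key : q * t * d < (d + 1) * Rr * d.
  have h1 : q * t * d <= 2 * d * t * d by rewrite ler_pM2r // ler_pM2r.
  have h2 : 2 * d * t * d < (d + 1) * m.
    have spos : 0 < s by exact: lt_le_trans tpos ts.
    have hm' : 2 * (d + 1) * s <= m by rewrite /s -hN.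
    have e1 : d * d * t <= d * d * s by rewrite ler_pM2l // mulr_gt0.
    have e2 : d * d * s < (d + 1) * (d + 1) * s by rewrite ltr_pM2r //; nra.
    have e3 : (d + 1) * (2 * (d + 1) * s) <= (d + 1) * m by rewrite ler_pM2l // addr_gt0.
    nra.
  have h3 : (d + 1) * m <= (d + 1) * Rr * d by rewrite -mulrA ler_pM2l // addr_gt0.
  lra.
by rewrite ltr_pM2r in key.
Qed.
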